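(* Let $r,k\geq 2$ and let $G$ be a non-empty $(v,b,r,k)$-configuration. Then there exist three edges of $G$ whose six endpoints are pairwise distinct.
   Context: For positive integers $v,b,r,k$, a $(v,b,r,k)$-configuration is a connected bipartite graph with $v$ vertices on one side, each of degree $r$, and $b$ vertices on the other side, each of degree $k$, containing no cycle of length $4$. *)

(* Defs.v *)
From mathcomp Require Import all_boot.
Set Implicit Arguments. Unset Strict Implicit. Unset Printing Implicit Defensive.

(* A bipartite graph with point side 'I_v and block side 'I_b is given by its
   incidence relation inc : 'I_v -> 'I_b -> bool (p ~ B iff inc p B). *)

Definition adj (v b : nat) (inc : 'I_v -> 'I_b -> bool) : rel ('I_v + 'I_b) :=
  fun x y => match x, y with
             | inl p, inr B => inc p B
             | inr B, inl p => inc p B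
             | _, _ => false
             end.

(* (v,b,r,k)-configuration: connected, points of degree r, blocks of degree k,
   no 4-cycle (two distinct points lie in at most one common block). *)
Definition configuration (v b r k : nat) (inc : 'I_v -> 'I_b -> bool) : Prop :=
  [/\ (forall x y : 'I_v + 'I_b, connect (adj inc) x y),
      (forall p : 'I_v, #|[set B | inc p B]| = r),
      (forall B : 'I_b, #|[set p | inc p B]| = k) &
      (forall (p q : 'I_v) (B C : 'I_b), p != q -> B != C ->
         ~~ [&& inc p B, inc q B, inc p C & inc q C])].

(* Main.v *)
Require Import Defs.
From mathcomp Require Import all_boot.

Lemma other_elt (T : finType) (A : {set T}) (x : T) :
  2 <= #|A| -> exists y, (y \in A) && (y != x).
Proof.
move=> h.
have : 0 < #|A :\ x|.
  have := cardsD1 x A; case: (x \in A) => /= e; rewrite e in h; [|by apply: leq_trans h].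
  by rewrite -ltnS.
rewrite card_gt0 => /set0Pn [y]; rewrite !inE => /andP [a b].
by exists y; rewrite a b.
Qed.

Lemma some_elt (T : finType) (A : {set T}) : 2 <= #|A| -> exists y, y \in A.
Proof.
move=> h; have : 0 < #|A| by apply: leq_trans h.
by rewrite card_gt0 => /set0Pn.
Qed.

Theorem lemma4 (v b r k : nat) (inc : 'I_v -> 'I_b -> bool) :
  2 <= r -> 2 <= k -> configuration r k inc -> 0 < v + b ->
  exists (p1 p2 p3 : 'I_v) (B1 B2 B3 : 'I_b),
    [/\ inc p1 B1, inc p2 B2, inc p3 B3,
        [&& p1 != p2, p1 != p3 & p2 != p3] &
        [&& B1 != B2, B1 != B3 & B2 != B3]].
Proof.
move=> hr hk [_ hdr hdk h4] hvb.
have [p _] : exists p : 'I_v, true.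
  case: v inc hdr hdk h4 hvb => [|v'] inc hdr hdk h4 hvb; last by exists ord0.
  case: b inc hdr hdk h4 hvb => [|b'] inc hdr hdk h4 hvb; first by [].
  have := hdk ord0; have : #|[set p : 'I_0 | inc p ord0]| = 0.
    by apply/eqP; rewrite cards_eq0; apply/eqP/setP => -[].
  by move=> ->; move=> e; rewrite -e in hk.
have hp : 2 <= #|[set B | inc p B]| by rewrite hdr.
have [B1] := some_elt _ _ hp; rewrite inE => pB1.
have [B2] := other_elt _ _ B1 hp; rewrite inE => /andP [pB2 nB21].
have h1 : 2 <= #|[set q | inc q B1]| by rewrite hdk.
have h2 : 2 <= #|[set q | inc q B2]| by rewrite hdk.
have [q1] := other_elt _ _ p h1; rewrite inE => /andP [q1B1 nq1p].
have [q2] := other_elt _ _ p h2; rewrite inE => /andP [q2B2 nq2p].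
have hq1 : 2 <= #|[set B | inc q1 B]| by rewrite hdr.
have [C1] := other_elt _ _ B1 hq1; rewrite inE => /andP [q1C1 nC1B1].
have nq12 : q1 != q2.
  apply/negP => /eqP e; subst q2.
  by have := h4 _ _ _ _ nq1p nB21; rewrite pB1 pB2 q1B1 q2B2.
have nC1B2 : C1 != B2.
  apply/negP => /eqP e; subst C1.
  by have := h4 _ _ _ _ nq1p nB21; rewrite pB1 pB2 q1B1 q1C1.
exists q1, p, q2, C1, B1, B2; split => //.
- by rewrite nq1p nq12 eq_sym nq2p.
- by rewrite nC1B1 nC1B2 eq_sym nB21.
Qed.
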